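(* Let $\nu\in\mathbb{N}$, let $(X,d)$ be a $\nu$-generalized metric space, and let $\{x_n\}_{n\in\mathbb{N}}$ be a sequence in $X$ whose terms $x_n$ $(n\in\mathbb{N})$ are pairwise distinct. Suppose that for every $\epsilon>0$ and for any two subsequences $\{x_{p_i}\}$ and $\{x_{q_i}\}$ of $\{x_n\}$, if $\limsup_{i\to\infty} d(x_{p_i},x_{q_i})\le\epsilon$, then there is $N$ such that $d(x_{p_i+1},x_{q_i+1})\le\epsilon$ for all $i\ge N$. If $d(x_n,x_{n+1})\to0$ as $n\to\infty$, then $\{x_n\}$ is $\nu$-Cauchy.
   Context: Let $X$ be a nonempty set, $d:X\times X\to[0,\infty)$, and $\nu\in\mathbb{N}$. $(X,d)$ is a $\nu$-generalized metric space if: (1) $d(x,y)=0$ iff $x=y$; (2) $d(x,y)=d(y,x)$ for all $x,y$; (3) $d(x,y)\le d(x,u_1)+d(u_1,u_2)+\dots+d(u_\nu,y)$ for every set $\{x,u_1,\dots,u_\nu,y\}$ of $\nu+2$ pairwise distinct elements of $X$. For $k\in\mathbb{N}$, a sequence $\{x_n\}$ in $X$ is $k$-Cauchy if $\lim_{n\to\infty}\sup\{d(x_n,x_{n+1+mk}): m\in\mathbb{Z}^+\}=0$, where $\mathbb{Z}^+$ denotes the nonnegative integers. A subsequence $\{x_{p_i}\}$ means $p_1<p_2<\cdots$ in $\mathbb{N}$. *)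

(* Defs.v *)
From Stdlib Require Import Reals.
Open Scope R_scope.

Definition gen_metric {X : Type} (nu : nat) (d : X -> X -> R) : Prop :=
  (forall x y, 0 <= d x y) /\
  (forall x y, d x y = 0 <-> x = y) /\
  (forall x y, d x y = d y x) /\
  (forall p : nat -> X,
      (forall i j, (i <= S nu)%nat -> (j <= S nu)%nat -> p i = p j -> i = j) ->
      d (p 0%nat) (p (S nu)) <= sum_f_R0 (fun i => d (p i) (p (S i))) nu).

(* k-Cauchy: lim_{n} sup { d(x_n, x_{n+1+mk}) : m >= 0 } = 0.
   The sups are finite from some index N on, and they tend to 0. *)
Definition k_cauchy {X : Type} (d : X -> X -> R) (k : nat) (x : nat -> X) : Prop :=
  exists (N : nat) (s : nat -> R),
    (forall n, (N <= n)%nat ->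
       is_lub (fun r => exists m : nat, r = d (x n) (x (n + 1 + m * k)%nat)) (s n)) /\
    Un_cv s 0.

Definition limsup_le (u : nat -> R) (l : R) : Prop :=
  forall delta, 0 < delta -> exists N : nat, forall i, (N <= i)%nat -> u i <= l + delta.

Definition strict_incr (p : nat -> nat) : Prop := forall i, (p i < p (S i))%nat.

(* Main.v *)
Require Import Defs.
From Stdlib Require Import Reals.
From Stdlib Require Import Arith Lra Lia Psatz Classical ClassicalEpsilon.
Open Scope R_scope.

Lemma sum_shift (g : nat -> R) n :
  sum_f_R0 g (S n) = g 0%nat + sum_f_R0 (fun k => g (S k)) n.
Proof.
  induction n.
  - simpl. ring.
  - change (sum_f_R0 g (S (S n))) with (sum_f_R0 g (S n) + g (S (S n))).
    rewrite IHn. simpl. ring.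
Qed.

Lemma sum_shift_le (g : nat -> R) n : (forall k, 0 <= g k) ->
  sum_f_R0 g n <= g 0%nat + sum_f_R0 (fun k => g (S k)) n.
Proof.
  intros H. destruct n.
  - simpl. specialize (H 1%nat). lra.
  - rewrite sum_shift.
    assert (sum_f_R0 (fun k => g (S k)) n <= sum_f_R0 (fun k => g (S k)) (S n)).
    { simpl. specialize (H (S (S n))). lra. }
    lra.
Qed.

Lemma sum_le_const (u : nat -> R) c n :
  (forall k, (k <= n)%nat -> u k <= c) -> sum_f_R0 u n <= (INR n + 1) * c.
Proof.
  induction n; intros H.
  - simpl. specialize (H 0%nat (le_n 0)). lra.
  - simpl sum_f_R0. rewrite S_INR.
    specialize (IHn (fun k Hk => H k (le_S _ _ Hk))).
    specialize (H (S n) (le_n _)). nra.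
Qed.

Lemma min_exists (P : nat -> Prop) :
  (exists m, P m) -> exists m, P m /\ forall k, (k < m)%nat -> ~ P k.
Proof.
  intros [m Hm]. apply NNPP; intro H.
  assert (forall n k, (k <= n)%nat -> ~ P k).
  { induction n; intros k Hk HP.
    - apply H. exists k. split; auto. intros; lia.
    - apply H. exists k. split; auto. intros j Hj HPj. apply (IHn j); [lia|auto]. }
  apply (H0 m m (le_n m) Hm).
Qed.

Lemma key (X : Type) (nu : nat) (d : X -> X -> R) (x : nat -> X) :
  (1 <= nu)%nat ->
  gen_metric nu d ->
  (forall n m : nat, x n = x m -> n = m) ->
  (forall (eps : R) (p q : nat -> nat), 0 < eps ->
     strict_incr p -> strict_incr q ->
     limsup_le (fun i => d (x (p i)) (x (q i))) eps ->
     exists N : nat, forall i, (N <= i)%nat ->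
       d (x (S (p i))) (x (S (q i))) <= eps) ->
  Un_cv (fun n => d (x n) (x (S n))) 0 ->
  forall eps, 0 < eps -> exists N, forall n m, (N <= n)%nat ->
    d (x n) (x (n + 1 + m * nu)%nat) <= eps.
Proof.
  intros Hnu Hg Hinj Hsub Ha eps Heps.
  destruct Hg as [Hpos [Hzero [Hsym Htri]]].
  destruct nu as [|nu']; [lia|].
  apply NNPP; intro Hcon.
  assert (Hsel: forall N, exists nm : nat*nat, (N <= fst nm)%nat /\
     eps < d (x (fst nm)) (x (fst nm + 1 + snd nm * S nu')%nat) /\
     forall k, (k < snd nm)%nat -> ~ eps < d (x (fst nm)) (x (fst nm + 1 + k * S nu')%nat)).
  { intro N. apply NNPP; intro H1. apply Hcon. exists N. intros n m Hn.
    apply Rnot_lt_le; intro Hlt.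
    destruct (min_exists (fun k => eps < d (x n) (x (n+1+k*S nu')%nat))) as [k [Hk1 Hk2]].
    { exists m; exact Hlt. }
    apply H1. exists (n,k). simpl. auto. }
  destruct (Ha eps Heps) as [N1 HN1].
  pose (G := fun N => proj1_sig (constructive_indefinite_description _ (Hsel N))).
  assert (HG : forall N, (N <= fst (G N))%nat /\
     eps < d (x (fst (G N))) (x (fst (G N) + 1 + snd (G N) * S nu')%nat) /\
     forall k, (k < snd (G N))%nat -> ~ eps < d (x (fst (G N))) (x (fst (G N) + 1 + k * S nu')%nat)).
  { intro N. exact (proj2_sig (constructive_indefinite_description _ (Hsel N))). }
  pose (r := fix r (i:nat) : nat*nat := match i with
        | O => G (S N1)
        | S i' => G (S (fst (r i') + 1 + snd (r i') * S nu')) end).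
  pose (P := fun i => fst (r i)). pose (M := fun i => snd (r i)).
  assert (HrG : forall i, exists N, r i = G N).
  { intro i; destruct i; eexists; reflexivity. }
  assert (HPS : forall i, (P i + 1 + M i * S nu' < P (S i))%nat).
  { intro i. unfold P, M. change (r (S i)) with (G (S (fst (r i) + 1 + snd (r i) * S nu'))).
    destruct (HG (S (fst (r i) + 1 + snd (r i) * S nu'))) as [H _]. lia. }
  assert (HP0 : (S N1 <= P 0)%nat).
  { unfold P. change (r 0%nat) with (G (S N1)). apply HG. }
  assert (HPi : forall i, (S N1 + i <= P i)%nat).
  { induction i. lia. specialize (HPS i). lia. }
  assert (HD : forall i, eps < d (x (P i)) (x (P i + 1 + M i * S nu')%nat)).
  { intro i. unfold P, M. destruct (HrG i) as [N ->]. apply HG. }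
  assert (Hmin : forall i k, (k < M i)%nat -> d (x (P i)) (x (P i + 1 + k * S nu')%nat) <= eps).
  { intros i k Hk. unfold P, M in *. destruct (HrG i) as [N Hr]. rewrite Hr in *.
    apply Rnot_lt_le. apply HG. exact Hk. }
  assert (HM : forall i, (1 <= M i)%nat).
  { intro i. destruct (M i) eqn:E; [|lia]. exfalso.
    specialize (HD i). rewrite E in HD.
    replace (P i + 1 + 0 * S nu')%nat with (S (P i)) in HD by lia.
    assert (HH := HN1 (P i) ltac:(specialize (HPi i); lia)).
    unfold R_dist in HH. pose proof (Rle_abs (d (x (P i)) (x (S (P i))) - 0)). lra. }
  destruct (Hsub eps (fun i => pred (P i)) (fun i => (P i + M i * S nu')%nat) Heps) as [N Hn].
  - intro i. pose proof (HPS i). pose proof (HPi i). lia.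
  - intro i. pose proof (HPS i). pose proof (HPi i). nia.
  - intros delta Hdelta.
    assert (H2 : 0 < INR nu' + 2) by (pose proof (pos_INR nu'); lra).
    pose (dl := delta / (INR nu' + 2)).
    assert (Hdl : 0 < dl) by (unfold dl; apply Rdiv_lt_0_compat; lra).
    assert (Hdl2 : dl * (INR nu' + 2) = delta) by (unfold dl; field; lra).
    destruct (Ha dl Hdl) as [K HK].
    assert (HK' : forall n, (K <= n)%nat -> d (x n) (x (S n)) <= dl).
    { intros n Hn. specialize (HK n Hn). unfold R_dist in HK.
      pose proof (Rle_abs (d (x n) (x (S n)) - 0)). lra. }
    exists K. intros i Hi. simpl.
    pose proof (HPi i) as HPi'. pose proof (HM i) as HMi. pose proof (Hmin i) as Hmi.
    destruct (M i) as [|m'] eqn:Em; [lia|].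
    pose (p := P i). pose (c := (p + 1 + m' * S nu')%nat).
    assert (Hc : (p + 1 <= c)%nat) by (unfold c; lia).
    assert (Hp1 : (1 <= p)%nat) by (unfold p; lia).
    pose (idx := fun j => match j with O => pred p | 1%nat => p | S (S k) => (c + k)%nat end).
    pose (pt := fun j => x (idx j)).
    assert (Hpt : forall j k, (j <= S (S nu'))%nat -> (k <= S (S nu'))%nat -> pt j = pt k -> j = k).
    { intros j k Hj Hk Heq. unfold pt in Heq. apply Hinj in Heq.
      destruct j as [|[|j]], k as [|[|k]]; simpl in Heq; lia. }
    pose proof (Htri pt Hpt) as T.
    assert (E1 : pt 0%nat = x (pred (P i))) by reflexivity.
    assert (E2 : pt (S (S nu')) = x (P i + S m' * S nu')%nat).
    { unfold pt; simpl. f_equal. unfold c, p. lia. }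
    rewrite E1, E2 in T.
    eapply Rle_trans; [exact T|].
    rewrite sum_shift.
    eapply Rle_trans.
    { apply Rplus_le_compat_l. apply sum_shift_le. intro; apply Hpos. }
    assert (F0 : d (pt 0%nat) (pt 1%nat) <= dl).
    { unfold pt; simpl. replace p with (S (pred p)) at 2 by lia. apply HK'. unfold p. lia. }
    assert (F1 : d (pt 1%nat) (pt 2%nat) <= eps).
    { unfold pt; simpl. replace (c + 0)%nat with (P i + 1 + m' * S nu')%nat by (unfold c, p; lia).
      apply Hmi. lia. }
    assert (F2 : sum_f_R0 (fun k => d (pt (S (S k))) (pt (S (S (S k))))) nu' <= (INR nu' + 1) * dl).
    { apply sum_le_const. intros k Hk. unfold pt; simpl.
      rewrite Nat.add_succ_r. apply HK'. unfold c, p. lia. }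
    nra.
  - specialize (Hn N (le_n N)). specialize (HD N). pose proof (HPi N).
    replace (S (pred (P N))) with (P N) in Hn by lia.
    replace (S (P N + M N * S nu')) with (P N + 1 + M N * S nu')%nat in Hn by lia.
    lra.
Qed.

Theorem lemma2p1 (X : Type) (nu : nat) (d : X -> X -> R) (x : nat -> X) :
  (1 <= nu)%nat ->
  gen_metric nu d ->
  (forall n m : nat, x n = x m -> n = m) ->
  (forall (eps : R) (p q : nat -> nat), 0 < eps ->
     strict_incr p -> strict_incr q ->
     limsup_le (fun i => d (x (p i)) (x (q i))) eps ->
     exists N : nat, forall i, (N <= i)%nat ->
       d (x (S (p i))) (x (S (q i))) <= eps) ->
  Un_cv (fun n => d (x n) (x (S n))) 0 ->
  k_cauchy d nu x.
Proof.
  intros Hnu Hg Hinj Hsub Ha.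
  pose proof (key X nu d x Hnu Hg Hinj Hsub Ha) as K.
  destruct Hg as [Hpos _].
  destruct (K 1 Rlt_0_1) as [N0 HN0].
  assert (Hex : forall n, exists s, (N0 <= n)%nat ->
     is_lub (fun r => exists m : nat, r = d (x n) (x (n + 1 + m * nu)%nat)) s).
  { intro n. destruct (Compare_dec.le_lt_dec N0 n) as [Hle|Hlt].
    - destruct (completeness (fun r => exists m : nat, r = d (x n) (x (n + 1 + m * nu)%nat))) as [s Hs].
      + exists 1. intros r [m ->]. apply HN0; auto.
      + exists (d (x n) (x (n + 1 + 0 * nu)%nat)). exists 0%nat; reflexivity.
      + exists s; intros; exact Hs.
    - exists 0. intro; lia. }
  exists N0, (fun n => proj1_sig (constructive_indefinite_description _ (Hex n))).
  split.
  - intros n Hn. exact (proj2_sig (constructive_indefinite_description _ (Hex n)) Hn).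
  - intros eps Heps. destruct (K (eps/2) ltac:(lra)) as [N2 HN2].
    exists (max N0 N2). intros n Hn. unfold R_dist.
    pose proof (proj2_sig (constructive_indefinite_description _ (Hex n)) ltac:(lia)) as Hl.
    set (s := proj1_sig (constructive_indefinite_description _ (Hex n))) in *.
    destruct Hl as [Hub Hleast].
    assert (s <= eps/2).
    { apply Hleast. intros r [m ->]. apply HN2; lia. }
    assert (0 <= s).
    { eapply Rle_trans; [apply (Hpos (x n) (x (n + 1 + 0 * nu)%nat))|].
      apply Hub. exists 0%nat; reflexivity. }
    rewrite Rminus_0_r, Rabs_pos_eq; lra.
Qed.
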